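(* For all positive semidefinite $n\times n$ matrices $A$ and $B$ and every $i=1,\dots,n$, $$\lambda_i\big(\min(A,1)\min(B,1)\big)\le \min(\lambda_i(AB),1).$$
   Context: For a positive semidefinite matrix $A$, $\min(A,1)$ denotes the matrix obtained by functional calculus from the function $x\mapsto\min(x,1)$, i.e. every eigenvalue of $A$ larger than $1$ is replaced by $1$ in a spectral decomposition. For a matrix $X$ with real nonnegative spectrum, $\lambda_1(X)\ge\dots\ge\lambda_n(X)$ denote its eigenvalues sorted non-increasingly. *)

(* Defs.v *)
From HB Require Import structures.
From mathcomp Require Import all_boot all_order all_algebra.
From mathcomp Require Import sesquilinear spectral.
Set Implicit Arguments. Unset Strict Implicit. Unset Printing Implicit Defensive.
Import Order.TTheory GRing.Theory Num.Theory.
Local Open Scope ring_scope.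
Local Open Scope sesquilinear_scope.

Definition psdmx (C : numClosedFieldType) n (A : 'M[C]_n) : Prop :=
  A \is hermsymmx /\ forall v : 'rV[C]_n, 0 <= (v *m A *m v ^t*) 0 0.

(* min(A,1) by functional calculus, using the spectral decomposition
   A = P^-1 diag(d) P (P unitary) provided by mathcomp's spectral.v. *)
Definition min1mx (C : numClosedFieldType) n (A : 'M[C]_n) : 'M[C]_n :=
  invmx (spectralmx A)
    *m diag_mx (map_mx (fun x => Num.min x 1) (spectral_diag A))
    *m spectralmx A.

Definition eigvals (C : numClosedFieldType) n (X : 'M[C]_n) : seq C :=
  sort (fun x y : C => y <= x) (sval (closed_field_poly_normal (char_poly X))).

(* lambda X i = the (i+1)-th largest eigenvalue (0-based index i). *)
Definition lambda (C : numClosedFieldType) n (X : 'M[C]_n) (i : nat) : C :=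
  nth 0 (eigvals X) i.

(* Main.v *)
Require Import Defs.
From HB Require Import structures.
From mathcomp Require Import all_boot all_order all_algebra.
From mathcomp Require Import sesquilinear spectral.
From mathcomp Require Import zify.
Import Order.TTheory GRing.Theory Num.Theory.
Local Open Scope ring_scope.
Local Open Scope sesquilinear_scope.
Set Implicit Arguments. Unset Strict Implicit. Unset Printing Implicit Defensive.

Lemma char_polyC (F : fieldType) m (X Y : 'M[F]_m) :
  char_poly (X *m Y) = char_poly (Y *m X).
Proof.
rewrite /char_poly /char_poly_mx !map_mxM.
set x := map_mx polyC X; set y := map_mx polyC Y.
set t := ('X : {poly F}).
pose M := block_mx t%:M x y (1%:M : 'M_m).
have tn0 : t ^+ m != 0 by rewrite expf_neq0 // polyX_eq0.
have E1 : block_mx 1%:M (-x) 0 t%:M *m M = block_mx (t%:M - x *m y) 0 (t%:M *m y) t%:M.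
  rewrite mulmx_block !mul1mx !mul0mx !add0r !mulmx1 mulNmx addrN.
  done.
have E2 : block_mx 1%:M 0 (-y) t%:M *m M = block_mx t%:M x 0 (t%:M - y *m x).
  rewrite mulmx_block !mul1mx !mul0mx !addr0 !mulmx1 mulNmx.
  rewrite mul_mx_scalar mul_scalar_mx addNr; congr block_mx.
  by rewrite addrC mulNmx.
have D1 := congr1 determinant E1; have D2 := congr1 determinant E2.
rewrite det_mulmx det_ublock det_lblock !det_scalar expr1n mul1r in D1.
rewrite det_mulmx det_lblock det_ublock !det_scalar expr1n mul1r in D2.
apply: (mulfI tn0); rewrite mulrC -D1 D2 mulrC; done.
Qed.

Section Aux.
Variable C : numClosedFieldType.
Variable n : nat.
Implicit Types (P M X Y : 'M[C]_n) (d : 'rV[C]_n) (v : 'rV[C]_n).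

Lemma trmxC_mul m p q (A : 'M[C]_(m, p)) (B : 'M[C]_(p, q)) :
  (A *m B)^t* = B^t* *m A^t*.
Proof. by rewrite trmx_mul map_mxM. Qed.

Lemma unit_tP P : P \is unitarymx -> P^t* *m P = 1%:M.
Proof. by move=> U; rewrite -invmx_unitary // mulVmx // unitarymx_unit. Qed.

Definition mk P d := P^t* *m diag_mx d *m P.

Definition qf M v := (v *m M *m v^t*) 0 0.

Lemma qf_mk P d v : qf (mk P d) v =
  \sum_j d 0 j * ((v *m P^t*) 0 j * ((v *m P^t*) 0 j)^*).
Proof.
rewrite /qf /mk.
have -> : v *m (P^t* *m diag_mx d *m P) *m v^t* =
   (v *m P^t*) *m diag_mx d *m (v *m P^t*)^t*.
  by rewrite trmxC_mul trmxCK -!mulmxA.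
rewrite mul_mx_diag !mxE; apply: eq_bigr => j _; rewrite !mxE.
by rewrite mulrA [_ * d 0 j]mulrC.
Qed.

Lemma hermE M : M \is hermsymmx -> M^t* = M.
Proof. by move/is_hermitianmxP; rewrite expr0 scale1r => <-. Qed.

Lemma hermP M : M^t* = M -> M \is hermsymmx.
Proof. by move=> h; apply/is_hermitianmxP; rewrite expr0 scale1r h. Qed.

Lemma diag_tC d : d \is a realmx -> (diag_mx d)^t* = diag_mx d.
Proof.
move=> dr; apply/matrixP=> i j; rewrite !mxE rmorphMn /=.
have [->|ne] := eqVneq i j; last by rewrite !mulr0n.
by rewrite !mulr1n (CrealP (mxOverP dr 0 j)).
Qed.

Lemma mk_herm P d : d \is a realmx -> mk P d \is hermsymmx.
Proof.
move=> dr; apply: hermP; rewrite /mk !trmxC_mul trmxCK diag_tC //.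
by rewrite -!mulmxA.
Qed.

Lemma herm_mk M : M \is hermsymmx ->
  M = mk (spectralmx M) (spectral_diag M).
Proof.
move=> h; rewrite /mk -invmx_unitary ?spectral_unitarymx //.
exact/orthomx_spectralP/hermitian_normalmx.
Qed.


Definition dl d := [seq d 0 j | j <- enum 'I_n].

Lemma char_poly_mk P d : P \is unitarymx ->
  char_poly (mk P d) = \prod_j ('X - (d 0 j)%:P).
Proof.
move=> U; rewrite /mk -mulmxA char_polyC mulmxtVK // char_poly_trig ?diag_mx_is_trig //.
by apply: eq_bigr => j _; rewrite mxE eqxx mulr1n.
Qed.

Lemma roots_of M d : char_poly M = \prod_j ('X - (d 0 j)%:P) ->
  perm_eq (sval (closed_field_poly_normal (char_poly M))) (dl d).
Proof.
move=> Hc; case: closed_field_poly_normal => r /= E.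
rewrite (monicP (char_poly_monic M)) scale1r in E.
apply: prod_XsubC_eq; rewrite -E Hc /dl big_map big_enum //.
Qed.

Lemma eig_perm M : M \is hermsymmx -> perm_eq (eigvals M) (dl (spectral_diag M)).
Proof.
move=> h; rewrite /eigvals perm_sort; apply: roots_of.
by rewrite {1}(herm_mk h) char_poly_mk // spectral_unitarymx.
Qed.

Lemma dl_real d : d \is a realmx -> all (fun x => x \is Num.real) (dl d).
Proof. by move=> dr; apply/allP => x /mapP [j _ ->]; exact: mxOverP. Qed.

Lemma cnt_card (p : pred C) d : count p (dl d) = #|[set j | p (d 0 j)]|.
Proof.
rewrite /dl count_map cardE /enum_mem size_filter count_filter.
by apply: eq_count => j; rewrite !inE andbT.
Qed.

Definition geC (x y : C) := y <= x.

Lemma eig_sorted M : M \is hermsymmx -> sorted geC (eigvals M).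
Proof.
move=> h; rewrite /eigvals.
have hr : all (fun x => x \is Num.real) (sval (closed_field_poly_normal (char_poly M))).
  have := eig_perm h; rewrite /eigvals perm_sort => /perm_all ->.
  exact/dl_real/hermitian_spectral_diag_real.
apply: (sort_sorted_in (P := fun x => x \is Num.real)) => //.
by move=> x y xr yr; rewrite /geC orbC; exact: real_leVge.
Qed.

Lemma eig_count M i : M \is hermsymmx -> (i < n)%N ->
  [/\ lambda M i \is Num.real,
      (i < count (fun x : C => (lambda M i <= x)%R) (dl (spectral_diag M)))%N &
      (n - i <= count (fun x : C => (x <= lambda M i)%R) (dl (spectral_diag M)))%N].
Proof.
move=> h ltin; have pe := eig_perm h; have so := eig_sorted h.
have dr := dl_real (hermitian_spectral_diag_real h).
set s := eigvals M in pe so *; rewrite /lambda -/s.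
have sz : size s = n by rewrite (perm_size pe) size_map size_enum_ord.
have sr : all (fun x => x \is Num.real) s by rewrite (perm_all _ pe).
have tr : transitive geC by move=> x y z; rewrite /geC => h1 h2; exact: le_trans h2 h1.
have rf : reflexive geC by move=> x; rewrite /geC.
have key := sorted_leq_nth tr rf 0 so.
split.
- by apply/(all_nthP 0 sr); rewrite sz.
- rewrite -(permP pe) -[X in count _ X](cat_take_drop i.+1 s) count_cat.
  apply: leq_trans (leq_addr _ _).
  rewrite (_ : count _ (take i.+1 s) = size (take i.+1 s)); last first.
    apply/eqP; rewrite -all_count; apply/(all_nthP 0) => j.
    rewrite size_takel ?sz // => ltj; rewrite nth_take //.
    apply: key; rewrite ?inE ?sz //.
    exact: leq_trans ltj ltin.
  by rewrite size_takel ?sz.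
- rewrite -(permP pe) -[X in count _ X](cat_take_drop i s) count_cat.
  apply: leq_trans (leq_addl _ _).
  rewrite (_ : count _ (drop i s) = size (drop i s)); last first.
    apply/eqP; rewrite -all_count; apply/(all_nthP 0) => j.
    rewrite size_drop sz => ltj; rewrite nth_drop.
    apply: (key i (i + j)) => //; rewrite ?inE ?sz // ?leq_addr //.
    by rewrite -ltn_subRL.
  by rewrite size_drop sz.
Qed.

Lemma rank_rowsub k (f : 'I_k -> 'I_n) P : P \is unitarymx -> injective f ->
  (k <= \rank (rowsub f P))%N.
Proof.
move=> U fi.
have E : rowsub f P *m (rowsub f P)^t* = 1%:M.
  apply/matrixP => a b; have := congr1 (fun M => M (f a) (f b)) (unitarymxP U).
  rewrite !mxE (inj_eq fi) => <-; apply: eq_bigr => j _; rewrite !mxE //.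
by rewrite -{1}(mxrank1 C k) -E mxrankM_maxl.
Qed.

Lemma vanish k (f : 'I_k -> 'I_n) P v j : P \is unitarymx ->
  (v <= rowsub f P)%MS -> (forall t, f t != j) -> (v *m P^t*) 0 j = 0.
Proof.
move=> U /submxP [D ->] nf.
rewrite -mulmxA mul_rowsub_mx (unitarymxP U) mxE.
by apply: big1 => t _; rewrite !mxE (negPf (nf t)) mulr0.
Qed.

Lemma mk1 P : P \is unitarymx -> mk P (const_mx 1) = 1%:M.
Proof. by move=> U; rewrite /mk diag_const_mx mulmx1 unit_tP. Qed.

Lemma qf1 P v : P \is unitarymx -> qf 1%:M v =
  \sum_j 1 * ((v *m P^t*) 0 j * ((v *m P^t*) 0 j)^*).
Proof.
move=> U; rewrite -(mk1 U) qf_mk; apply: eq_bigr => j _; rewrite mxE //.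
Qed.

Lemma vpos v : v != 0 -> 0 < qf 1%:M v.
Proof.
move=> nz; rewrite /qf mulmx1 mxE lt_def sumr_ge0 ?andbT; last first.
  by move=> j _; rewrite !mxE mul_conjC_ge0.
apply: contra nz => /eqP /psumr_eq0P H.
have {}H : forall j, v 0 j = 0.
  have Hge : forall i : 'I_n, true -> 0 <= v 0 i * (v ^t*) i 0.
    by move=> i _; rewrite !mxE mul_conjC_ge0.
  move=> j; have := H Hge j isT; rewrite !mxE => /eqP.
  by rewrite mul_conjC_eq0 => /eqP.
by apply/eqP/matrixP => a b; rewrite ord1 H mxE.
Qed.

Lemma nz_row m (V : 'M[C]_(m, n)) : V != 0 -> exists i, row i V != 0.
Proof.
move=> nz; apply/existsP; apply: contraR nz; rewrite negb_exists => /forallP H.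
by apply/eqP/row_matrixP => i; rewrite row0; apply/eqP; have := H i; rewrite negbK.
Qed.

Lemma mono M N i : M \is hermsymmx -> N \is hermsymmx ->
  (forall v, qf M v <= qf N v) -> (i < n)%N -> lambda M i <= lambda N i.
Proof.
move=> hM hN le ltin.
have [ra cA _] := eig_count hM ltin.
have [rb _ cB] := eig_count hN ltin.
set a := lambda M i in ra cA *; set b := lambda N i in rb cB *.
set PM := spectralmx M; set dM := spectral_diag M.
set PN := spectralmx N; set dN := spectral_diag N.
have UM : PM \is unitarymx by exact: spectral_unitarymx.
have UN : PN \is unitarymx by exact: spectral_unitarymx.
have EM : M = mk PM dM := herm_mk hM.
have EN : N = mk PN dN := herm_mk hN.
rewrite cnt_card in cA; rewrite cnt_card in cB.
set A := [set j | a <= dM 0 j] in cA; set B := [set j | dN 0 j <= b] in cB.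
pose U := rowsub (@enum_val _ (mem A)) PM.
pose W := rowsub (@enum_val _ (mem B)) PN.
have rU : (#|A| <= \rank U)%N by apply: rank_rowsub => //; exact: enum_val_inj.
have rW : (#|B| <= \rank W)%N by apply: rank_rowsub => //; exact: enum_val_inj.
have rI : (0 < \rank (U :&: W)%MS)%N.
  have := mxrank_sum_cap U W; have := rank_leq_col (U + W)%MS.
  move: rU rW cA cB; clear; lia.
have [i0 nzv] : exists i0, row i0 (U :&: W)%MS != 0.
  by apply: nz_row; rewrite -mxrank_eq0 -lt0n.
set v := row i0 _ in nzv.
have vU : (v <= U)%MS by apply: submx_trans (row_sub _ _) (capmxSl _ _).
have vW : (v <= W)%MS by apply: submx_trans (row_sub _ _) (capmxSr _ _).
have Npos := vpos nzv.
have lo : a * qf 1%:M v <= qf M v.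
  rewrite EM qf_mk (qf1 _ UM) mulr_sumr; apply: ler_sum => j _; rewrite mul1r.
  have [jA|jA] := boolP (j \in A).
    by apply: ler_wpM2r; [rewrite mul_conjC_ge0 | move: jA; rewrite inE].
  rewrite (vanish _ vU) ?conjC0 ?mulr0 //.
  by move=> t; apply: contraNneq jA => <-; exact: enum_valP.
have hi : qf N v <= b * qf 1%:M v.
  rewrite EN qf_mk (qf1 _ UN) mulr_sumr; apply: ler_sum => j _; rewrite mul1r.
  have [jB|jB] := boolP (j \in B).
    by apply: ler_wpM2r; [rewrite mul_conjC_ge0 | move: jB; rewrite inE].
  rewrite (vanish _ vW) ?conjC0 ?mulr0 //.
  by move=> t; apply: contraNneq jB => <-; exact: enum_valP.
rewrite -(ler_pM2r Npos); apply: le_trans lo _; apply: le_trans hi.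
exact: le.
Qed.

Lemma qf_row P d j : P \is unitarymx -> qf (mk P d) (row j P) = d 0 j.
Proof.
move=> U; rewrite qf_mk -row_mul (unitarymxP U) (bigD1 j) //= big1 ?addr0.
  by rewrite !mxE eqxx mulr1n conjC1 !mulr1.
by move=> k nk; rewrite !mxE eq_sym (negPf nk) mulr0n conjC0 !mulr0.
Qed.

Lemma qf_mk_le P (d e : 'rV[C]_n) v : (forall j, d 0 j <= e 0 j) ->
  qf (mk P d) v <= qf (mk P e) v.
Proof.
move=> H; rewrite !qf_mk; apply: ler_sum => j _.
by apply: ler_wpM2r; [rewrite mul_conjC_ge0 | exact: H].
Qed.

Lemma qf_cong (T : 'M[C]_n) M v : qf (T *m M *m T^t*) v = qf M (v *m T).
Proof. by rewrite /qf trmxC_mul -!mulmxA. Qed.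

Lemma cong_herm (T : 'M[C]_n) M : M \is hermsymmx -> T *m M *m T^t* \is hermsymmx.
Proof. by move=> h; apply: hermP; rewrite !trmxC_mul trmxCK (hermE h) -!mulmxA. Qed.

Lemma mk_sq P (e : 'rV[C]_n) : P \is unitarymx ->
  mk P (map_mx sqrtC e) *m mk P (map_mx sqrtC e) = mk P e.
Proof.
move=> U; rewrite /mk -!mulmxA (mulmxA P) (unitarymxP U) mul1mx !mulmxA.
congr (_ *m _); rewrite -mulmxA; congr (_ *m _).
apply/matrixP => a b; rewrite mul_diag_mx !mxE.
have [->|ne] := eqVneq a b; last by rewrite !mulr0n mulr0.
by rewrite !mulr1n -expr2 sqrtCK.
Qed.

Lemma lam_cp (M N : 'M[C]_n) i : char_poly M = char_poly N -> lambda M i = lambda N i.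
Proof. by move=> E; rewrite /lambda /eigvals E. Qed.

Lemma lam1 i : (i < n)%N -> lambda (1%:M : 'M[C]_n) i = 1.
Proof.
move=> lt; have pe : perm_eq (eigvals (1%:M : 'M[C]_n)) (dl (const_mx 1)).
  rewrite /eigvals perm_sort; apply: roots_of.
  rewrite char_poly_trig ?scalar_mx_is_trig //.
  by apply: eq_bigr => j _; rewrite !mxE eqxx.
have sz : size (eigvals (1%:M : 'M[C]_n)) = n.
  by rewrite (perm_size pe) size_map size_enum_ord.
have : lambda (1%:M : 'M[C]_n) i \in dl (const_mx 1).
  by rewrite /lambda -(perm_mem pe (nth 0 (eigvals (1%:M : 'M[C]_n)) i)) mem_nth ?sz.
by case/mapP => j _ ->; rewrite mxE.
Qed.

Lemma psd_mk M : psdmx M ->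
  [/\ M \is hermsymmx, M = mk (spectralmx M) (spectral_diag M),
      spectral_diag M \is a realmx & forall j, 0 <= spectral_diag M 0 j].
Proof.
case=> h ps; have E := herm_mk h.
split => //; first exact: hermitian_spectral_diag_real.
move=> j; rewrite -(qf_row (spectral_diag M) j (spectral_unitarymx M)) -E.
exact: ps.
Qed.

Lemma min1_facts (x : C) : x \is Num.real -> 0 <= x ->
  [/\ Num.min x 1 \is Num.real, 0 <= Num.min x 1, Num.min x 1 <= x & Num.min x 1 <= 1].
Proof.
move=> xr x0; rewrite minEle; case: ifP => h; split => //.
by move: (real_leVge xr (real1 C)); rewrite h.

Qed.

End Aux.

Theorem lemma3 (C : numClosedFieldType) (n : nat) (A B : 'M[C]_n) :
  psdmx A -> psdmx B ->
  forall i : 'I_n,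
    lambda (min1mx A *m min1mx B) i <= Num.min (lambda (A *m B) i) 1.
Proof.
move=> pA pB i.
have [hA EA rA pA0] := psd_mk pA; have [hB EB rB pB0] := psd_mk pB.
set PA := spectralmx A in EA; set dA := spectral_diag A in EA rA pA0.
set PB := spectralmx B in EB; set dB := spectral_diag B in EB rB pB0.
have UA : PA \is unitarymx by exact: spectral_unitarymx.
have UB : PB \is unitarymx by exact: spectral_unitarymx.
pose mA := map_mx (fun x => Num.min x 1) dA.
pose mB := map_mx (fun x => Num.min x 1) dB.
have fA (j : 'I_n) := min1_facts (mxOverP rA 0 j) (pA0 j).
have fB (j : 'I_n) := min1_facts (mxOverP rB 0 j) (pB0 j).
have E1 : min1mx A = mk PA mA by rewrite /min1mx invmx_unitary.
have E2 : min1mx B = mk PB mB by rewrite /min1mx invmx_unitary.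
have rmA : mA \is a realmx by apply/mxOverP => a j; rewrite ord1 mxE; case: (fA j).
pose S := mk PA (map_mx sqrtC mA); pose R := mk PB (map_mx sqrtC dB).
have rS : map_mx sqrtC mA \is a realmx.
  by apply/mxOverP => a j; rewrite ord1 !mxE sqrtC_real //; case: (fA j).
have rR : map_mx sqrtC dB \is a realmx.
  by apply/mxOverP => a j; rewrite ord1 !mxE sqrtC_real.
have hS : S \is hermsymmx by exact: mk_herm.
have hR : R \is hermsymmx by exact: mk_herm.
have SS : S *m S = mk PA mA by exact: mk_sq.
have RR : R *m R = B by rewrite EB; exact: mk_sq.
have SSt : S = S^t* by rewrite hermE.
have RRt : R = R^t* by rewrite hermE.
have hA' : mk PA mA \is hermsymmx by exact: mk_herm.
have hB' : mk PB mB \is hermsymmx.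
  by apply: mk_herm; apply/mxOverP => a j; rewrite ord1 mxE; case: (fB j).
set X1 := S *m mk PB mB *m S.
set X2 := S *m B *m S.
set X3 := R *m mk PA mA *m R.
set X4 := R *m A *m R.
have h1 : X1 \is hermsymmx by rewrite /X1 {2}SSt; exact: cong_herm.
have h2 : X2 \is hermsymmx by rewrite /X2 {2}SSt; exact: cong_herm.
have h3 : X3 \is hermsymmx by rewrite /X3 {2}RRt; exact: cong_herm.
have h4 : X4 \is hermsymmx by rewrite /X4 {2}RRt; exact: cong_herm.
have L1 : lambda (min1mx A *m min1mx B) i = lambda X1 i.
  apply: lam_cp; rewrite E1 E2 -SS -mulmxA char_polyC /X1 !mulmxA //.
have L2 : lambda X2 i = lambda X3 i.
  apply: lam_cp; rewrite /X2 /X3 -RR.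
  have -> : S *m (R *m R) *m S = (S *m R) *m (R *m S) by rewrite !mulmxA.
  by rewrite char_polyC (mulmxA (R *m S) S R) -(mulmxA R S S) SS.
have L4 : lambda X4 i = lambda (A *m B) i.
  by apply: lam_cp; rewrite /X4 -(mulmxA R A R) char_polyC -(mulmxA A R R) RR.
have M12 : lambda X1 i <= lambda X2 i.
  apply: mono => // v.
  rewrite /X1 /X2 {2 4}SSt !qf_cong EB; apply: qf_mk_le => j.
  by rewrite mxE; case: (fB j).
have M34 : lambda X3 i <= lambda X4 i.
  apply: mono => // v.
  rewrite /X3 /X4 {2 4}RRt !qf_cong EA; apply: qf_mk_le => j.
  by rewrite mxE; case: (fA j).
have M1 : lambda X1 i <= 1.
  rewrite -(@lam1 C n i (ltn_ord i)).
  apply: mono; [exact: h1 | by apply: hermP; rewrite trmx1 map_mx1 | move=> v | exact: ltn_ord].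
  rewrite /X1 {2}SSt qf_cong.
  apply: (@le_trans _ _ (qf (mk PB (const_mx 1)) (v *m S))).
    by apply: qf_mk_le => j; rewrite !mxE; case: (fB j).
  rewrite mk1 // -qf_cong mulmx1 -SSt SS -(mk1 UA); apply: qf_mk_le => j.
  by rewrite !mxE; case: (fA j).
have [r1 _ _] := eig_count h1 (ltn_ord i).
have [r4 _ _] := eig_count h4 (ltn_ord i).
rewrite L1 -L4 in r4 *.
have le14 : lambda X1 i <= lambda X4 i by apply: le_trans M12 _; rewrite L2.
by rewrite minEle; case: ifP.
Qed.
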